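(* Let $I$ be a general ring and $a\in I$. The following are equivalent: (1) $a$ is quasipolar in $I$; (2) there exists $b\in\mathrm{comm}^2(a)$ such that $ab^2=b$ and $a^2b-a\in QN(I)$. Moreover, an element $b$ as in (2), if it exists, is unique.
   Context: A general ring is an associative ring not necessarily having an identity. For $p,q\in I$, $p*q=p+q-pq$; $Q(I)=\{q\in I\mid p*q=0=q*p \text{ for some } p\in I\}$; $\mathrm{comm}(a)=\{x\in I\mid xa=ax\}$, $\mathrm{comm}^2(a)=\{x\in I\mid xy=yx\text{ for all }y\in\mathrm{comm}(a)\}$; $QN(I)=\{q\in I\mid qx\in Q(I)\text{ for every }x\in\mathrm{comm}(q)\}$. An element $a\in I$ is quasipolar in $I$ if there is an idempotent $p=p^2\in\mathrm{comm}^2(a)$ with $a+p\in Q(I)$ and $a-ap\in QN(I)$. *)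

(* Defs.v *)
(* A "general ring" = associative ring, not necessarily unital:
   an additive abelian group (zmodType) with an associative, bi-distributive
   multiplication.  No multiplicative identity is assumed. *)
From HB Require Import structures.
From mathcomp Require Import all_boot all_order all_algebra.
Set Implicit Arguments. Unset Strict Implicit. Unset Printing Implicit Defensive.
Import GRing.Theory.
Local Open Scope ring_scope.

HB.mixin Record Zmodule_isGenRing R of GRing.Zmodule R := {
  gmul : R -> R -> R;
  gmulA : associative gmul;
  gmulDl : left_distributive gmul +%R;
  gmulDr : right_distributive gmul +%R
}.

#[short(type="genRingType")]
HB.structure Definition GenRing := {R of Zmodule_isGenRing R & GRing.Zmodule R}.

Notation "x ** y" := (gmul x y) (at level 40, left associativity).

Section GenRingDefs.
Variable I : genRingType.

Definition circ (p q : I) : I := p + q - p ** q.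

Definition Qset (q : I) : Prop := exists p : I, circ p q = 0 /\ circ q p = 0.

Definition comm (a x : I) : Prop := x ** a = a ** x.
Definition comm2 (a x : I) : Prop := forall y : I, comm a y -> x ** y = y ** x.

Definition QN (q : I) : Prop := forall x : I, comm q x -> Qset (q ** x).

Definition quasipolar (a : I) : Prop :=
  exists p : I, [/\ p ** p = p, comm2 a p, Qset (a + p) & QN (a - a ** p)].

End GenRingDefs.

(* Main.v *)
Require Import Defs.
From HB Require Import structures.
From mathcomp Require Import all_boot all_order all_algebra.
Set Implicit Arguments. Unset Strict Implicit. Unset Printing Implicit Defensive.
Import GRing.Theory.
Local Open Scope ring_scope.

Section Aux.
Variable I : genRingType.
Implicit Types x y z : I.

Lemma gmulr0 x : x ** 0 = 0.
Proof. by apply: (@addrI _ (x ** 0)); rewrite -gmulDr !addr0. Qed.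
Lemma gmul0r x : 0 ** x = 0.
Proof. by apply: (@addrI _ (0 ** x)); rewrite -gmulDl !addr0. Qed.
Lemma gmulrN x y : x ** (- y) = - (x ** y).
Proof. by apply/eqP; rewrite -addr_eq0 -gmulDr addNr gmulr0. Qed.
Lemma gmulNr x y : (- x) ** y = - (x ** y).
Proof. by apply/eqP; rewrite -addr_eq0 -gmulDl addNr gmul0r. Qed.
Lemma gmulrBr x y z : x ** (y - z) = x ** y - x ** z.
Proof. by rewrite gmulDr gmulrN. Qed.
Lemma gmulrBl x y z : (y - z) ** x = y ** x - z ** x.
Proof. by rewrite gmulDl gmulNr. Qed.
Lemma gmulrMn x y n : x ** (y *+ n) = (x ** y) *+ n.
Proof. elim: n => [|n IH]; first by rewrite !mulr0n gmulr0.
by rewrite !mulrS gmulDr IH. Qed.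
Lemma gmulMnr x y n : (y *+ n) ** x = (y ** x) *+ n.
Proof. elim: n => [|n IH]; first by rewrite !mulr0n gmul0r.
by rewrite !mulrS gmulDl IH. Qed.
Lemma gmulrz x y m : x ** (y *~ m) = (x ** y) *~ m.
Proof. case: m => n; first exact: gmulrMn.
by rewrite NegzE !mulrNz gmulrN; congr (- _); exact: gmulrMn. Qed.
Lemma gmulzr x y m : (y *~ m) ** x = (y ** x) *~ m.
Proof. case: m => n; first exact: gmulMnr.
by rewrite NegzE !mulrNz gmulNr; congr (- _); exact: gmulMnr. Qed.

Definition U := (int * I)%type.
HB.instance Definition _ := GRing.Zmodule.on U.

Definition uone : U := (1, 0).
Definition umul (u v : U) : U :=
  (u.1 * v.1, v.2 *~ u.1 + u.2 *~ v.1 + u.2 ** v.2).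


Lemma umulA : associative umul.
Proof.
case=> m x [n y] [k z]; rewrite /umul /=; congr pair; first by rewrite mulrA.
rewrite !gmulDl !gmulDr !gmulrz !gmulzr !mulrzDl gmulA.
rewrite -!mulrzA [n * m]mulrC [k * m]mulrC.
rewrite -!addrA; congr (_ + _); congr (_ + _).
rewrite addrCA; congr (_ + _); rewrite [RHS]addrCA; congr (_ + _).
by rewrite addrCA.
Qed.

Lemma umul1 : left_id uone umul.
Proof. by case=> n y; rewrite /umul /= mul1r mulr1z mul0rz gmul0r !addr0. Qed.
Lemma umulr1 : right_id uone umul.
Proof. by case=> n y; rewrite /umul /= mulr1 mulr1z mul0rz gmulr0 add0r !addr0. Qed.
Lemma umulDl : left_distributive umul +%R.
Proof.
case=> m x [n y] [k z]; rewrite /umul /=; congr pair; first by rewrite mulrDl.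
rewrite mulrzDr mulrzDl gmulDl /=.
by rewrite (addrACA (z *~ m) (z *~ n)) (addrACA (z *~ m + x *~ k)).
Qed.
Lemma umulDr : right_distributive umul +%R.
Proof.
case=> m x [n y] [k z]; rewrite /umul /=; congr pair; first by rewrite mulrDr.
rewrite mulrzDr mulrzDl gmulDr /=.
by rewrite (addrACA (y *~ m) (z *~ m)) (addrACA (y *~ m + x *~ n)).
Qed.
Lemma uone_neq0 : uone != 0.
Proof. by []. Qed.

HB.instance Definition _ := GRing.Zmodule_isNzRing.Build U umulA umul1 umulr1 umulDl umulDr uone_neq0.

Definition inj (x : I) : U := (0, x).
Lemma injD x y : inj (x + y) = inj x + inj y. Proof. by rewrite /inj; congr pair; rewrite addr0. Qed.
Lemma injN x : inj (- x) = - inj x. Proof. by rewrite /inj; congr pair; rewrite oppr0. Qed.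
Lemma injB x y : inj (x - y) = inj x - inj y. Proof. by rewrite injD injN. Qed.
Lemma inj0 : inj 0 = 0. Proof. by []. Qed.
Lemma injM x y : inj (x ** y) = inj x * inj y.
Proof. by rewrite /inj /GRing.mul /= /umul /= mulr0 !mulr0z !add0r. Qed.
Lemma inj_inj : injective inj. Proof. by move=> x y []. Qed.
End Aux.

Section G.
Variable R : nzRingType.
Implicit Types u v w c : R.
Lemma inv_comm u v c : v * u = 1 -> u * v = 1 -> c * u = u * c -> c * v = v * c.
Proof.
move=> vu uv cu.
rewrite -{1}[c]mul1r -vu -(mulrA v u c) -cu mulrA -mulrA uv mulr1 //.
Qed.
Lemma inv_factor u w z : u * w = w * u -> z * (u * w) = 1 -> (u * w) * z = 1 ->
  exists v, v * u = 1 /\ u * v = 1.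
Proof.
move=> uw zl zr; have wc : w * (u * w) = (u * w) * w by rewrite mulrA -uw.
have zw := inv_comm zl zr wc.
exists (w * z); split; last by rewrite mulrA.
by rewrite zw -mulrA -uw.
Qed.
End G.

Section T.
Variable I : genRingType.
Implicit Types p q x y : I.
Local Notation inj := (@inj I).

Lemma L_circ p q : (1 - inj p) * (1 - inj q) = 1 - inj (circ p q).
Proof.
rewrite mulrBl !mulrBr !mul1r mulr1 /circ injB injD injM.
rewrite (@opprB (U I)) !(@opprD (U I)) !(@opprK (U I)) !(@addrA (U I)).
by rewrite (@addrAC (U I) (1 - inj q)) (@addrAC (U I) 1).
Qed.

Lemma one_sub_inj0 c : 1 - inj c = 1 -> c = 0.
Proof. by move/eqP; rewrite subr_eq addrC -subr_eq subrr eq_sym => /eqP/inj_inj. Qed.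

Lemma L_Q q : Qset q -> exists v : U I, v * (1 - inj q) = 1 /\ (1 - inj q) * v = 1.
Proof.
case=> p [h1 h2]; exists (1 - inj p); by rewrite !L_circ h1 h2 inj0 subr0.
Qed.

Lemma L_Q' q (v : U I) : v * (1 - inj q) = 1 -> (1 - inj q) * v = 1 -> Qset q.
Proof.
case: v => m y h1 h2.
have hm : m = 1.
  by move: (congr1 fst h1) => /=; rewrite mulr1.
subst m.
have hv : ((1, y) : U I) = 1 - inj (- y).
  change ((1, y) = ((1 - 0, 0 - - y) : U I)); by rewrite subr0 sub0r opprK.
rewrite hv !L_circ in h1 h2.
by exists (- y); split; apply: one_sub_inj0.
Qed.

Lemma L_comm x y : x ** y = y ** x <-> inj x * inj y = inj y * inj x.
Proof. by rewrite -!injM; split=> [->|/inj_inj]. Qed.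

Lemma QN_opp q : QN q -> QN (- q).
Proof.
move=> hq x hx; have hx' : comm q x.
  by move: hx; rewrite /comm gmulrN gmulNr => /oppr_inj.
rewrite gmulNr -gmulrN; apply: hq.
by rewrite /comm gmulrN gmulNr hx'.
Qed.
End T.

Section D.
Variable I : genRingType.
Local Notation inj := (@inj I).

Lemma dir12 (a : I) : quasipolar a ->
  exists b : I, [/\ comm2 a b, a ** (b ** b) = b & QN (a ** a ** b - a)].
Proof.
case=> p [pp cp [w [hw1 hw2]] hq].
set A := inj a; set P := inj p; set V := 1 - inj w; set W := 1 - (A + P).
have VW : V * W = 1 by rewrite /V /W -injD L_circ hw1 inj0 subr0.
have WV : W * V = 1 by rewrite /V /W -injD L_circ hw2 inj0 subr0.
have PP : P * P = P by rewrite -injM pp.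
have PA : P * A = A * P by apply/L_comm; apply: cp.
have PW : P * W = W * P.
  by rewrite /W mulrBr mulrBl mulr1 mul1r mulrDr mulrDl PA.
have PV := inv_comm VW WV PW.
have WP : W * P = - (A * P).
  by rewrite /W mulrBl mul1r mulrDl PP opprD addrCA subrr addr0.
have Bdef : inj (w ** p - p) = - (V * P).
  by rewrite injB injM /V mulrBl mul1r opprB.
exists (w ** p - p); split.
- move=> y hy; apply/L_comm; rewrite Bdef.
  have YA : inj y * A = A * inj y by apply/L_comm.
  have YP : inj y * P = P * inj y by apply/esym/L_comm; apply: cp.
  have YW : inj y * W = W * inj y.
    by rewrite /W mulrBr mulrBl mulr1 mul1r mulrDr mulrDl YA YP.
  have YV := inv_comm VW WV YW.
  by rewrite mulrN mulNr mulrA YV -!mulrA YP.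
- apply: inj_inj; rewrite !injM Bdef mulrNN.
  rewrite -/A.
  have -> : V * P * (V * P) = P * (V * V).
    by rewrite -PV mulrA -(mulrA P V P) -PV mulrA PP -mulrA.
  have AP : A * P = - (P * W) by rewrite PW WP opprK.
  by rewrite mulrA AP mulNr -mulrA (mulrA W V V) WV mul1r PV.
- have E : a ** a ** (w ** p - p) = a ** p.
    apply: inj_inj; rewrite !injM Bdef -/A.
    have AP : A * P = - (P * W) by rewrite PW WP opprK.
    by rewrite mulrN -mulrA -PV (mulrA A P V) AP mulNr -mulrA WV mulr1 mulrN opprK.
  by rewrite E -opprB; apply: QN_opp.
Qed.

Lemma zm1 (V : zmodType) (o a p t : V) : o - p - (a - t + (p - p)) = o + (t - a) - p.
Proof. by rewrite subrr addr0 opprB addrAC. Qed.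

Lemma dir21 (a b : I) : comm2 a b -> a ** (b ** b) = b -> QN (a ** a ** b - a) ->
  quasipolar a.
Proof.
move=> cb hb hq.
set A := inj a; set B := inj b; set P := A * B.
have BA : B * A = A * B by apply/L_comm; apply: cb.
have HB : A * (B * B) = B by rewrite /A /B -!injM hb.
have PP : P * P = P by rewrite /P mulrA -(mulrA A B A) BA mulrA -mulrA -mulrA HB.
have PB : P * B = B by rewrite /P -mulrA HB.
have BP : B * P = B by rewrite /P mulrA BA PB.
have cAP : GRing.comm A P by rewrite /GRing.comm /P -mulrA BA.
exists (a ** b); split.
- by apply: inj_inj; rewrite !injM.
- move=> y hy; apply/L_comm; rewrite injM.
  have YA : inj y * A = A * inj y by apply/L_comm.
  have BY : B * inj y = inj y * B by apply/L_comm; apply: cb.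
  by rewrite -mulrA BY mulrA -YA -mulrA.
- set q := a ** a ** b - a.
  have [Z [Z1 Z2]] := L_Q (hq q erefl).
  set Q := inj q.
  have Qdef : Q = A * P - A by rewrite /Q injB !injM -mulrA.
  rewrite injM -/Q in Z1 Z2.
  have fac : 1 - Q * Q = (1 + Q) * (1 - Q).
    by rewrite mulrDl mul1r mulrBr mulr1 addrA subrK.
  have cQ : GRing.comm (1 + Q) (1 - Q).
    apply: commrB; first exact: commr1.
    by apply: commr_sym; apply: commrD; [apply: commr1 | apply: commr_refl].
  rewrite fac in Z1 Z2.
  have [R [R1 R2]] := inv_factor cQ Z1 Z2.
  set W := 1 - (A + P).
  have cAA : GRing.comm A A by apply: commr_refl.
  have cPP : GRing.comm P P by apply: commr_refl.
  have cPA : GRing.comm P A by apply: commr_sym.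
  have cXQ : forall X, GRing.comm X A -> GRing.comm X P -> GRing.comm X (1 + Q).
    move=> X h1 h2; rewrite Qdef; apply: commrD; first exact: commr1.
    by apply: commrB => //; apply: commrM.
  have cXW : forall X, GRing.comm X A -> GRing.comm X P -> GRing.comm X W.
    by move=> X h1 h2; apply: commrB; [exact: commr1 | apply: commrD].
  have cWQ : GRing.comm W (1 + Q).
    apply: commr_sym; apply: cXW; apply: commr_sym; [exact: cXQ | exact: cXQ].
  have RW : W * R = R * W := inv_comm R1 R2 cWQ.
  have E1 : W * B = - P.
    by rewrite /W mulrBl mul1r mulrDl PB opprD addrCA subrr addr0.
  have E1' : B * W = - P.
    by rewrite /W mulrBr mulr1 mulrDr BA BP opprD addrCA subrr addr0.
  have L : W * (1 - P) = 1 - P - (A - A * P + (P - P)).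
    by rewrite /W mulrBl mul1r mulrDl !mulrBr !mulr1 PP.
  have PAP : P * (A * P) - P * A = 0.
    by rewrite mulrA -cAP -mulrA PP subrr.
  have Rr : (1 - P) * (1 + Q) = 1 + (A * P - A) - P.
    by rewrite Qdef mulrBl mul1r mulrDr mulr1 mulrBr PAP addr0.
  have E2 : W * (1 - P) = (1 - P) * (1 + Q) by rewrite L Rr zm1.
  have E2' : (1 - P) * W = (1 - P) * (1 + Q).
    rewrite -E2; apply: cXW.
      by apply: commr_sym; apply: commrB; [exact: commr1 | exact: cAP].
    by apply: commr_sym; apply: commrB; [exact: commr1 | exact: cPP].
  apply: (@L_Q' _ _ (- B + (1 - P) * R)); rewrite injD injM -/A -/B -/P -/W.
  + rewrite mulrDl mulNr E1' opprK -mulrA -RW mulrA E2' -mulrA R2 mulr1.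
    by rewrite addrC subrK.
  + rewrite mulrDr mulrN E1 opprK mulrA E2 -mulrA R2 mulr1.
    by rewrite addrC subrK.
- by rewrite gmulA -opprB; apply: QN_opp.
Qed.

Definition sol (a b : I) := [/\ comm2 a b, a ** (b ** b) = b & QN (a ** a ** b - a)].

Lemma uniq_aux (a b b' : I) : sol a b -> sol a b' ->
  inj (a ** b) = inj (a ** b) * inj (a ** b').
Proof.
case=> cb hb _ [cb' hb' hq'].
rewrite !injM.
set A := inj a; set B := inj b; set B' := inj b'; set P := A * B; set P' := A * B'.
have cBA : GRing.comm B A by apply/L_comm; apply: cb.
have cB'A : GRing.comm B' A by apply/L_comm; apply: cb'.
have cB'B : GRing.comm B' B by apply/L_comm; apply: cb'; apply: cb.
have cAA : GRing.comm A A by apply: commr_refl.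
have cBB : GRing.comm B B by apply: commr_refl.
have cB'B' : GRing.comm B' B' by apply: commr_refl.
have cAB := commr_sym cBA; have cAB' := commr_sym cB'A; have cBB' := commr_sym cB'B.
have HB : A * (B * B) = B by rewrite /A /B -!injM hb.
have HB' : A * (B' * B') = B' by rewrite /A /B' -!injM hb'.
have PP : P * P = P by rewrite /P mulrA -(mulrA A B A) cBA mulrA -mulrA -mulrA HB.
have PP' : P' * P' = P' by rewrite /P' mulrA -(mulrA A B' A) cB'A mulrA -mulrA -mulrA HB'.
have cPP' : GRing.comm P P'.
  by apply: commrM; apply: commr_sym; apply: commrM.
set q := a ** a ** b' - a.
have cq : comm q (- b).
  apply/L_comm; rewrite injN injB !injM -/A -/B -/B'.
  apply: commr_sym; apply: commrN; apply: commr_sym; apply: commrB => //.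
  by apply: commrM => //; apply: commrM.
have [Z [Z1 Z2]] := L_Q (hq' _ cq).
set E := P - P * P'.
have hE : inj (q ** - b) = E.
  rewrite gmulrN injN injM injB !injM -/A -/B -/B' mulrBl opprB /E /P /P'.
  congr (_ - _).
  by rewrite -!mulrA; congr (_ * _); rewrite cB'B mulrA cBA -mulrA.
rewrite hE in Z1 Z2.
have EE : E * E = E.
  have -> : E = P * (1 - P') by rewrite /E mulrBr mulr1.
  have c1 : GRing.comm P (1 - P') by apply: commrB => //; apply: commr1.
  rewrite -mulrA (mulrA (1 - P') P) -c1 mulrA mulrA PP -mulrA.
  by congr (_ * _); rewrite mulrBr mulr1 mulrBl mul1r PP' subrr subr0.
have E0 : E = 0.
  by rewrite -[E]mul1r -Z1 -mulrA mulrBl mul1r EE subrr mulr0.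
by apply/eqP; rewrite -subr_eq0 -/E E0.
Qed.

Lemma uniq (a b b' : I) : sol a b -> sol a b' -> b = b'.
Proof.
move=> s1 s2.
have h1 := uniq_aux s1 s2; have h2 := uniq_aux s2 s1.
case: s1 => cb hb _; case: s2 => cb' hb' _.
move: h1 h2; rewrite !injM.
set A := inj a; set B := inj b; set B' := inj b'; set P := A * B; set P' := A * B'.
move=> h1 h2.
have cBA : GRing.comm B A by apply/L_comm; apply: cb.
have cB'A : GRing.comm B' A by apply/L_comm; apply: cb'.
have cB'B : GRing.comm B' B by apply/L_comm; apply: cb'; apply: cb.
have cAA : GRing.comm A A by apply: commr_refl.
have cAB := commr_sym cBA; have cAB' := commr_sym cB'A.
have cPP' : GRing.comm P P'.
  by apply: commrM; apply: commr_sym; apply: commrM.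
have ePP : P = P' by rewrite h1 cPP' -h2.
have HB : A * (B * B) = B by rewrite /A /B -!injM hb.
have HB' : A * (B' * B') = B' by rewrite /A /B' -!injM hb'.
have BP : B * P = B by rewrite /P mulrA cBA -mulrA HB.
have PB' : P' * B' = B' by rewrite /P' -mulrA HB'.
apply: (@inj_inj I); rewrite -/B -/B'.
by rewrite -{1}BP ePP /P' mulrA cBA -/P ePP PB'.
Qed.
End D.

Unset Implicit Arguments.
Unset Strict Implicit.

Theorem theorem2p8 (I : genRingType) (a : I) :
  (quasipolar a <->
     exists b : I, [/\ comm2 a b, a ** (b ** b) = b & QN (a ** a ** b - a)])
  /\ (forall b b' : I,
        [/\ comm2 a b, a ** (b ** b) = b & QN (a ** a ** b - a)] ->
        [/\ comm2 a b', a ** (b' ** b') = b' & QN (a ** a ** b' - a)] ->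
        b = b').
Proof.
split; first split.
- exact: dir12.
- by case=> b [h1 h2 h3]; apply: (dir21 h1 h2 h3).
- by move=> b b' s1 s2; apply: (uniq s1 s2).
Qed.
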